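(* Let $\pi=(\pi_1,\ldots,\pi_n)$ be a permutation of $\{1,\ldots,n\}$ that is convex, i.e. $\pi_2-\pi_1\le\pi_3-\pi_2\le\cdots\le\pi_n-\pi_{n-1}$, and let $P$ be its permutation matrix. Then for each $k\le n$, the set $I_k(P)$ of rows of $P$ containing a $1$ in one of the first $k$ columns (equivalently $I_k(P)=\{i:\pi_i\le k\}$) is an interval of length $k$, i.e. a set of $k$ consecutive integers.
   Context: The permutation matrix $P$ of $\pi$ is the $n\times n$ $(0,1)$-matrix with $1$ in positions $(i,\pi_i)$. An interval in $\{1,\ldots,n\}$ is a set $\{k,k+1,\ldots,l\}$ with $1\le k\le l\le n$; its length is $l-k+1$. *)

(* Defs.v *)
From mathcomp Require Import all_boot all_order all_algebra all_fingroup.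
Set Implicit Arguments. Unset Strict Implicit. Unset Printing Implicit Defensive.
Import GRing.Theory Num.Theory.

(* Conventions: positions/values are 0-based, i.e. {1..n} is modelled by 'I_n
   (position p corresponds to p+1). A permutation is s : 'S_n. *)

Definition convex_perm (n : nat) (s : 'S_n) : Prop :=
  forall i j l : 'I_n, val j = (val i).+1 -> val l = (val j).+1 ->
    ((s j)%:Z - (s i)%:Z <= (s l)%:Z - (s j)%:Z)%R.

Definition permMatrix (n : nat) (s : 'S_n) : 'M[int]_n :=
  \matrix_(i < n, j < n) ((s i == j)%:R)%R.

Definition Ik (n : nat) (P : 'M[int]_n) (k : nat) : {set 'I_n} :=
  [set i | [exists j : 'I_n, (val j < k) && (P i j == 1%R)]].

Definition is_interval_of_length (n : nat) (S : {set 'I_n}) (k : nat) : Prop :=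
  exists a : nat, a + k <= n /\ S = [set i : 'I_n | a <= val i < a + k].

(* Main.v *)
Require Import Defs.
From mathcomp Require Import all_boot all_order all_algebra all_fingroup zify.
Import Order.TTheory GRing.Theory Num.Theory.
Local Open Scope ring_scope.
Local Open Scope nat_scope.

Lemma card_iv n a c : a <= c <= n -> #|[set i : 'I_n | a <= val i < c]| = c - a.
Proof.
move=> /andP[ac cn].
rewrite cardsE cardE /enum_mem -enumT /= size_filter.
have -> : count (mem (fun i : 'I_n => a <= val i < c)) (enum 'I_n)
   = count (fun m => a <= m < c) (map val (enum 'I_n)) by rewrite count_map.
rewrite val_enum_ord.
have -> : n = a + (c - a) + (n - c) by lia.
rewrite !iotaD !count_cat add0n.
rewrite (@eq_in_count _ _ pred0) ?count_pred0; last by move=> x; rewrite mem_iota /=; lia.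
rewrite (@eq_in_count _ _ predT (iota a _)) ?count_predT ?size_iota; last by move=> x; rewrite mem_iota /=; lia.
rewrite (@eq_in_count _ _ pred0 (iota _ (_ - _))) ?count_pred0; last by move=> x; rewrite mem_iota /=; lia.
lia.
Qed.
Section Cv.
Variables (n : nat) (s : 'S_n).
Hypothesis cs : convex_perm s.

Definition g (m : nat) : int := oapp (fun i : 'I_n => (val (s i))%:Z) 0%R (insub m).
Lemma gE (i : 'I_n) : g (val i) = (val (s i))%:Z.
Proof. by rewrite /g valK. Qed.

Definition d m := (g m.+1 - g m)%R.

Lemma gconv m : m.+2 < n -> (d m <= d m.+1)%R.
Proof.
move=> h.
have h0 : m < n by lia. have h1 : m.+1 < n by lia.
have := cs (Ordinal h0) (Ordinal h1) (Ordinal h) erefl erefl.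
by rewrite /d -(gE (Ordinal h0)) -(gE (Ordinal h1)) -(gE (Ordinal h)).
Qed.

Lemma dmono m p : m <= p -> p.+1 < n -> (d m <= d p)%R.
Proof.
elim: p => [|p IH] hmp hp.
  by have -> : m = 0 by lia.
case: (ltnP m p.+1) => h.
  have := IH ltac:(lia) ltac:(lia); have := @gconv p ltac:(lia); lia.
by have -> : m = p.+1 by lia.
Qed.

Lemma back i k : i + k < n -> (g (i + k) - g i <= k%:Z * d (i + k).-1)%R.
Proof.
elim: k => [|k IH] h; first by rewrite addn0 subrr mul0r.
have h' := IH ltac:(lia).
have -> : (i + k.+1).-1 = i + k by lia.
have e : g (i + k.+1) = (g (i+k) + d (i + k))%R by rewrite /d addnS addrC subrK.
rewrite e.
case: k IH h h' e => [|k] IH h h' e.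
  rewrite addn0 in h' *. lia.
have hm : (d (i + k.+1).-1 <= d (i + k.+1))%R by apply: dmono; lia.
have : (k.+1%:Z * d (i + k.+1).-1 <= k.+1%:Z * d (i + k.+1))%R by rewrite ler_pM2l.
lia.
Qed.

Lemma fwd j k : j + k < n -> (k%:Z * d j <= g (j + k) - g j)%R.
Proof.
elim: k => [|k IH] h; first by rewrite addn0 subrr mul0r.
have h' := IH ltac:(lia).
have e : g (j + k.+1) = (g (j+k) + d (j + k))%R by rewrite /d addnS addrC subrK.
have hm : (d j <= d (j + k))%R by apply: dmono; lia.
rewrite e. lia.
Qed.

Lemma nopeak i j l : i < j -> j < l -> l < n ->
  (g i < g j)%R -> (g l < g j)%R -> False.
Proof.
move=> ij jl ln h1 h2.
have b := @back i (j - i) ltac:(lia).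
have f := @fwd j (l - j) ltac:(lia).
have e1 : i + (j - i) = j by lia. rewrite e1 in b.
have e2 : j + (l - j) = l by lia. rewrite e2 in f.
have hm : (d j.-1 <= d j)%R by apply: dmono; lia.
have dp : (0 < d j.-1)%R.
  rewrite ltNge; apply/negP => hd.
  have : ((j - i)%:Z * d j.-1 <= 0)%R by apply: mulr_ge0_le0.
  lia.
have : (0 < (l - j)%:Z * d j)%R by apply: mulr_gt0; lia.
lia.
Qed.
End Cv.

Theorem lemma4p2 (n : nat) (s : 'S_n) (k : nat) :
  convex_perm s -> 1 <= k <= n ->
  is_interval_of_length (Ik (permMatrix s) k) k.
Proof.
move=> cs /andP[k1 kn].
have eS : Ik (permMatrix s) k = [set i | s i < k].
  apply/setP => i; rewrite !inE; apply/existsP/idP => [[j /andP[jk]]|h].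
    rewrite mxE; case: (s i =P j) => [-> //|_]; by [].
  by exists (s i); rewrite h mxE eqxx.
rewrite eS; set S := [set i | s i < k].
have cS : #|S| = k.
  have -> : S = s @^-1: [set j : 'I_n | 0 <= val j < k].
    by apply/setP => i; rewrite !inE.
  by rewrite card_preimset ?card_iv //; [lia | exact: perm_inj].
have : 0 < #|S| by rewrite cS.
rewrite card_gt0 => /set0Pn[i0 i0S].
have [a [aS amin]] : exists a : 'I_n, a \in S /\ forall j : 'I_n, j \in S -> val a <= val j.
  by case: (arg_minnP (fun i : 'I_n => val i) i0S) => a aS amin; exists a.
have [b [bS bmax]] : exists b : 'I_n, b \in S /\ forall j : 'I_n, j \in S -> val j <= val b.
  by case: (arg_maxnP (fun i : 'I_n => val i) i0S) => b bS bmax; exists b.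
have eS2 : S = [set i : 'I_n | val a <= val i < (val b).+1].
  apply/setP => x; rewrite !inE; apply/idP/idP => [xS|/andP[ax xb]].
    have xS' : x \in S by rewrite inE.
    have h1 : val a <= val x := amin _ xS'. have h2 : val x <= val b := bmax _ xS'. by rewrite h1 ltnS h2.
  case: (ltnP (val a) (val x)) => ax'; last first.
    have -> : x = a by apply: ord_inj; move: ax ax'; rewrite /=; lia.
    by rewrite inE in aS.
  case: (ltnP (val x) (val b)) => xb'; last first.
    have -> : x = b by apply: ord_inj; move: ax ax' xb xb'; rewrite /=; lia.
    by rewrite inE in bS.
  rewrite ltnNge; apply/negP => kx.
  move: aS bS; rewrite !inE => aS bS.
  apply: (@nopeak n s cs (val a) (val x) (val b)) => //.
  - exact: ltn_ord.
  - by rewrite !gE ltz_nat; apply: leq_trans aS kx.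
  - by rewrite !gE ltz_nat; apply: leq_trans bS kx.
have ab : val a <= val b by rewrite amin.
have e : (val b).+1 - val a = k.
  by rewrite -cS eS2 card_iv //; apply/andP; split; [exact: leqW | exact: ltn_ord].
exists (val a); split; first by rewrite -e subnKC ?ltn_ord //; exact: leqW.
by rewrite eS2 -e subnKC // leqW.
Qed.
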